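(* Let $\mathcal{X}$ be an extension-closed subcategory of $\mathcal{C}$ and $\mathcal{W}$ a cogenerator for $\mathcal{X}$. Let $n\ge1$ and $C\in\mathcal{C}$. Then $C\in\widehat{\mathcal{X}}_n$ if and only if there exists an $\mathbb{E}$-triangle sequence $W_n\to\cdots\to W_2\to W_1\to X_0\to C$ with $X_0\in\mathcal{X}$ and $W_i\in\mathcal{W}$ for $1\le i\le n$, i.e. there exist $\mathbb{E}$-triangles $K_1\to X_0\to C\dashrightarrow$ and $K_{i+1}\to W_i\to K_i\dashrightarrow$ for $1\le i\le n-1$, with $K_n=W_n$.
   Context: $\mathcal{C}=(\mathcal{C},\mathbb{E},\mathfrak{s})$ is an extriangulated category (in the sense of Nakaoka–Palu) with enough projectives and enough injectives; a conflation realizing $\delta\in\mathbb{E}(C,A)$ is written as an $\mathbb{E}$-triangle $A\to B\to C\dashrightarrow$. All subcategories are full, additive, closed under isomorphisms and direct summands. $\mathcal{X}$ is extension-closed if for every $\mathbb{E}$-triangle $A\to B\to C\dashrightarrow$ with $A,C\in\mathcal{X}$ one has $B\in\mathcal{X}$. $\mathcal{W}$ is a cogenerator for $\mathcal{X}$ if $\mathcal{W}\subseteq\mathcal{X}$ and for each $X\in\mathcal{X}$ there is an $\mathbb{E}$-triangle $X\to W\to X'\dashrightarrow$ with $W\in\mathcal{W}$, $X'\in\mathcal{X}$. For $n\ge0$, $\widehat{\mathcal{X}}_n$ is the subcategory of objects $C$ for which there exist $\mathbb{E}$-triangles $K_{i+1}\to X_i\to K_i\dashrightarrow$ ($0\le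 i\le n-1$) with $K_0=C$, all $X_i\in\mathcal{X}$ and $K_n\in\mathcal{X}$. *)

(* Defs.v *)
From HB Require Import structures.
From mathcomp Require Import all_boot all_algebra.
Set Implicit Arguments. Unset Strict Implicit. Unset Printing Implicit Defensive.
Import GRing.Theory.
Local Open Scope ring_scope.

(* Data of an extriangulated category (Nakaoka--Palu):                 *)
(*  an additive category, a biadditive functor E : C^op x C -> Ab,      *)
(*  and a realization s.  [Ext C A] is E(C,A); [push a] is a_* and      *)
(*  [pull c] is c^*; [real d x y] means that the sequence               *)
(*  A -x-> B -y-> C belongs to the equivalence class s(d).              *)
Record ExtriData := {
  obj : Type;
  hom : obj -> obj -> zmodType;
  comp : forall A B C : obj, hom B C -> hom A B -> hom A C;
  idm : forall A : obj, hom A A;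
  Ext : obj -> obj -> zmodType;
  push : forall A A' C : obj, hom A A' -> Ext C A -> Ext C A';
  pull : forall A C C' : obj, hom C' C -> Ext C A -> Ext C' A;
  real : forall A B C : obj, Ext C A -> hom A B -> hom B C -> Prop
}.
Arguments comp {_ _ _ _} _ _.
Arguments idm {_} _.
Arguments push {_ _ _ _} _ _.
Arguments pull {_ _ _ _} _ _.
Arguments real {_ _ _ _} _ _ _.

Section ExtriDefs.
Variable C : ExtriData.
Local Notation Ob := (obj C).
Local Notation Hm := (@hom C).
Local Notation Ex := (@Ext C).

Definition is_iso (A B : Ob) (f : Hm A B) : Prop :=
  exists g : Hm B A, comp g f = idm A /\ comp f g = idm B.

Definition isomorphic (A B : Ob) : Prop := exists f : Hm A B, is_iso f.

Definition is_biproduct (A1 A2 P : Ob) (i1 : Hm A1 P) (i2 : Hm A2 P)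
    (p1 : Hm P A1) (p2 : Hm P A2) : Prop :=
  [/\ comp p1 i1 = idm A1, comp p2 i2 = idm A2, comp p1 i2 = 0,
      comp p2 i1 = 0 & comp i1 p1 + comp i2 p2 = idm P].

Definition is_zero_obj (Z : Ob) : Prop := idm Z = 0.

Definition category_axioms : Prop :=
  [/\ (forall (A B D E : Ob) (f : Hm D E) (g : Hm B D) (h : Hm A B),
         comp f (comp g h) = comp (comp f g) h),
      (forall (A B : Ob) (f : Hm A B), comp (idm B) f = f),
      (forall (A B : Ob) (f : Hm A B), comp f (idm A) = f),
      (forall (A B D : Ob) (f f' : Hm B D) (g : Hm A B),
         comp (f + f') g = comp f g + comp f' g) &
      (forall (A B D : Ob) (f : Hm B D) (g g' : Hm A B),
         comp f (g + g') = comp f g + comp f g')].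

Definition additive_axioms : Prop :=
  (exists Z : Ob, is_zero_obj Z) /\
  (forall A1 A2 : Ob, exists (P : Ob) (i1 : Hm A1 P) (i2 : Hm A2 P)
       (p1 : Hm P A1) (p2 : Hm P A2), is_biproduct i1 i2 p1 p2).

Definition bifunctor_axioms : Prop :=
  ( (forall (A D : Ob) (d : Ex D A), push (idm A) d = d) /\
      (forall (A D : Ob) (d : Ex D A), pull (idm D) d = d) /\
      (forall (A A' A'' D : Ob) (a : Hm A A') (a' : Hm A' A'') (d : Ex D A),
         push (comp a' a) d = push a' (push a d)) /\
      (forall (A D D' D'' : Ob) (c : Hm D' D) (c' : Hm D'' D') (d : Ex D A),
         pull (comp c c') d = pull c' (pull c d)) /\
      (forall (A A' D D' : Ob) (a : Hm A A') (c : Hm D' D) (d : Ex D A),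
         push a (pull c d) = pull c (push a d)) /\
      (forall (A A' D : Ob) (a : Hm A A') (d d' : Ex D A),
         push a (d + d') = push a d + push a d') /\
      (forall (A A' D : Ob) (a a' : Hm A A') (d : Ex D A),
         push (a + a') d = push a d + push a' d) /\
      (forall (A D D' : Ob) (c : Hm D' D) (d d' : Ex D A),
         pull c (d + d') = pull c d + pull c d') /\
      (forall (A D D' : Ob) (c c' : Hm D' D) (d : Ex D A),
         pull (c + c') d = pull c d + pull c' d)).

Definition equiv_seq (A B B' D : Ob) (x : Hm A B) (y : Hm B D)
    (x' : Hm A B') (y' : Hm B' D) : Prop :=
  exists b : Hm B B', is_iso b /\ comp b x = x' /\ comp y' b = y.

Definition realization_axioms : Prop :=
  [/\ (forall (A D : Ob) (d : Ex D A),
         exists (B : Ob) (x : Hm A B) (y : Hm B D), real d x y),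
      (forall (A B B' D : Ob) (d : Ex D A) (x : Hm A B) (y : Hm B D)
              (x' : Hm A B') (y' : Hm B' D),
         real d x y -> (real d x' y' <-> equiv_seq x y x' y')) &
      (forall (A B D A' B' D' : Ob) (d : Ex D A) (d' : Ex D' A')
              (x : Hm A B) (y : Hm B D) (x' : Hm A' B') (y' : Hm B' D')
              (a : Hm A A') (c : Hm D D'),
         real d x y -> real d' x' y' -> push a d = pull c d' ->
         exists b : Hm B B', comp b x = comp x' a /\ comp y' b = comp c y)].

Definition additive_realization : Prop :=
  (forall (A D P : Ob) (i1 : Hm A P) (i2 : Hm D P) (p1 : Hm P A) (p2 : Hm P D),
     is_biproduct i1 i2 p1 p2 -> real (0 : Ex D A) i1 p2) /\
  (forall (A B D A' B' D' PA PB PD : Ob)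
          (iA1 : Hm A PA) (iA2 : Hm A' PA) (pA1 : Hm PA A) (pA2 : Hm PA A')
          (iB1 : Hm B PB) (iB2 : Hm B' PB) (pB1 : Hm PB B) (pB2 : Hm PB B')
          (iD1 : Hm D PD) (iD2 : Hm D' PD) (pD1 : Hm PD D) (pD2 : Hm PD D')
          (d : Ex D A) (d' : Ex D' A')
          (x : Hm A B) (y : Hm B D) (x' : Hm A' B') (y' : Hm B' D'),
     is_biproduct iA1 iA2 pA1 pA2 -> is_biproduct iB1 iB2 pB1 pB2 ->
     is_biproduct iD1 iD2 pD1 pD2 ->
     real d x y -> real d' x' y' ->
     real (push iA1 (pull pD1 d) + push iA2 (pull pD2 d'))
          (comp iB1 (comp x pA1) + comp iB2 (comp x' pA2))
          (comp iD1 (comp y pB1) + comp iD2 (comp y' pB2))).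

Definition ET3 : Prop :=
  forall (A B D A' B' D' : Ob) (d : Ex D A) (d' : Ex D' A')
         (x : Hm A B) (y : Hm B D) (x' : Hm A' B') (y' : Hm B' D')
         (a : Hm A A') (b : Hm B B'),
    real d x y -> real d' x' y' -> comp b x = comp x' a ->
    exists c : Hm D D', comp c y = comp y' b /\ push a d = pull c d'.

Definition ET3op : Prop :=
  forall (A B D A' B' D' : Ob) (d : Ex D A) (d' : Ex D' A')
         (x : Hm A B) (y : Hm B D) (x' : Hm A' B') (y' : Hm B' D')
         (b : Hm B B') (c : Hm D D'),
    real d x y -> real d' x' y' -> comp y' b = comp c y ->
    exists a : Hm A A', comp x' a = comp b x /\ push a d = pull c d'.

Definition ET4 : Prop :=
  forall (A B D C0 F : Ob) (d : Ex D A) (d' : Ex F B)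
         (f : Hm A B) (f' : Hm B D) (g : Hm B C0) (g' : Hm C0 F),
    real d f f' -> real d' g g' ->
    exists (E : Ob) (e : Hm D E) (e' : Hm E F) (h' : Hm C0 E) (d'' : Ex E A),
      ( real d'' (comp g f) h' /\ real (push f' d') e e' /\
          comp e f' = comp h' g /\ comp e' h' = g' /\
          pull e d'' = d /\ push f d'' = pull e' d').

Definition ET4op : Prop :=
  forall (D A B F C0 : Ob) (d : Ex B D) (d' : Ex C0 F)
         (f' : Hm D A) (f : Hm A B) (g' : Hm F B) (g : Hm B C0),
    real d f' f -> real d' g' g ->
    exists (E : Ob) (e : Hm D E) (e' : Hm E F) (h' : Hm E A) (d'' : Ex C0 E),
      ( real d'' h' (comp g f) /\ real (pull g' d) e e' /\
          comp f h' = comp g' e' /\ comp h' e = f' /\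
          push e' d'' = d' /\ pull g d'' = push e d).

Definition extriangulated : Prop :=
  ( category_axioms /\ additive_axioms /\ bifunctor_axioms /\ realization_axioms /\
      additive_realization /\ ET3 /\ ET3op /\ ET4 /\ ET4op).

Definition Etriangle (A B D : Ob) (x : Hm A B) (y : Hm B D) : Prop :=
  exists d : Ex D A, real d x y.

Definition Etri (A B D : Ob) : Prop :=
  exists (x : Hm A B) (y : Hm B D), Etriangle x y.

Definition projective (P : Ob) : Prop :=
  forall (A B D : Ob) (x : Hm A B) (y : Hm B D) (c : Hm P D),
    Etriangle x y -> exists b : Hm P B, comp y b = c.

Definition injective (I : Ob) : Prop :=
  forall (A B D : Ob) (x : Hm A B) (y : Hm B D) (a : Hm A I),
    Etriangle x y -> exists b : Hm B I, comp b x = a.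

Definition enough_projectives : Prop :=
  forall D : Ob, exists (A P : Ob), projective P /\ Etri A P D.

Definition enough_injectives : Prop :=
  forall A : Ob, exists (I D : Ob), injective I /\ Etri A I D.

Definition subcategory (X : Ob -> Prop) : Prop :=
  [/\ (forall A B : Ob, isomorphic A B -> X A -> X B),
      (exists Z : Ob, is_zero_obj Z /\ X Z),
      (forall (A1 A2 P : Ob) (i1 : Hm A1 P) (i2 : Hm A2 P)
              (p1 : Hm P A1) (p2 : Hm P A2),
         is_biproduct i1 i2 p1 p2 -> X A1 -> X A2 -> X P) &
      (forall (A1 A2 P : Ob) (i1 : Hm A1 P) (i2 : Hm A2 P)
              (p1 : Hm P A1) (p2 : Hm P A2),
         is_biproduct i1 i2 p1 p2 -> X P -> X A1 /\ X A2)].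

Definition extension_closed (X : Ob -> Prop) : Prop :=
  forall A B D : Ob, Etri A B D -> X A -> X D -> X B.

Definition cogenerator (W X : Ob -> Prop) : Prop :=
  (forall A : Ob, W A -> X A) /\
  (forall A : Ob, X A -> exists (W0 X' : Ob), W W0 /\ X X' /\ Etri A W0 X').

Definition Xhat (X : Ob -> Prop) (n : nat) (D : Ob) : Prop :=
  exists K : nat -> Ob,
    [/\ K 0%N = D, X (K n) &
        forall i : nat, (i < n)%N -> exists Xi : Ob, X Xi /\ Etri (K i.+1) Xi (K i)].

Definition W_resolution (X W : Ob -> Prop) (n : nat) (D : Ob) : Prop :=
  exists (X0 : Ob) (K : nat -> Ob),
    [/\ X X0, Etri (K 1%N) X0 D, W (K n) &
        forall i : nat, (1 <= i)%N -> (i <= n - 1)%N ->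
          exists Wi : Ob, W Wi /\ Etri (K i.+1) Wi (K i)].
End ExtriDefs.

(* Main.v *)
From Pilot Require Import Defs.
From mathcomp Require Import all_boot all_algebra.
Set Implicit Arguments. Unset Strict Implicit. Unset Printing Implicit Defensive.
Import Pilot.Defs.
Import GRing.Theory.
Local Open Scope ring_scope.

Lemma addf0 (U V : zmodType) (f : U -> V) :
  (forall x y, f (x + y) = f x + f y) -> f 0 = 0.
Proof.
move=> H; have := H 0 0; rewrite addr0 => /(congr1 (fun z => z - f 0)).
by rewrite subrr addrK => <-.
Qed.

Lemma addfB (U V : zmodType) (f : U -> V) :
  (forall x y, f (x + y) = f x + f y) -> forall x y, f (x - y) = f x - f y.
Proof.
move=> H x y; have H0 := addf0 H.
have HN : f (- y) = - f y.
  by apply/eqP; rewrite -addr_eq0 -H addrC subrr H0.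
by rewrite H HN.
Qed.

Ltac unpackC HC :=
  case: (HC) => [[Hass Hidl Hidr Hcl Hcr] [[[Z HZ] Hbip]
    [[Hpid [Hqid [Hpc [Hqc [Hpq [Hpa [Hpa' [Hqa Hqa']]]]]]]]
    [[Hr1 Hr2 Hr3] [[Har1 Har2] [H3 [H3op [H4 H4op]]]]]]]].

Section Basic.
Variable C : ExtriData.
Hypothesis HC : extriangulated C.
Local Notation Ob := (obj C).

Lemma compA (A B D E : Ob) (f : hom D E) (g : hom B D) (h : hom A B) :
  comp f (comp g h) = comp (comp f g) h.
Proof. by unpackC HC; apply: Hass. Qed.
Lemma comp1l (A B : Ob) (f : hom A B) : comp (idm B) f = f.
Proof. by unpackC HC; apply: Hidl. Qed.
Lemma comp1r (A B : Ob) (f : hom A B) : comp f (idm A) = f.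
Proof. by unpackC HC; apply: Hidr. Qed.
Lemma compDl (A B D : Ob) (f f' : hom B D) (g : hom A B) :
  comp (f + f') g = comp f g + comp f' g.
Proof. by unpackC HC; apply: Hcl. Qed.
Lemma compDr (A B D : Ob) (f : hom B D) (g g' : hom A B) :
  comp f (g + g') = comp f g + comp f g'.
Proof. by unpackC HC; apply: Hcr. Qed.
Lemma compr0 (A B D : Ob) (f : hom B D) : comp f (0 : hom A B) = 0.
Proof. exact: (addf0 (compDr f)). Qed.
Lemma comp0l (A B D : Ob) (g : hom A B) : comp (0 : hom B D) g = 0.
Proof. exact: (addf0 (fun f f' => compDl f f' g)). Qed.
Lemma compBr (A B D : Ob) (f : hom B D) (g g' : hom A B) :
  comp f (g - g') = comp f g - comp f g'.
Proof. exact: (addfB (compDr f)). Qed.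
Lemma compBl (A B D : Ob) (f f' : hom B D) (g : hom A B) :
  comp (f - f') g = comp f g - comp f' g.
Proof. exact: (addfB (fun f f' => compDl f f' g)). Qed.

Lemma push1 (A D : Ob) (d : Ext D A) : push (idm A) d = d.
Proof. by unpackC HC; apply: Hpid. Qed.
Lemma pull1 (A D : Ob) (d : Ext D A) : pull (idm D) d = d.
Proof. by unpackC HC; apply: Hqid. Qed.
Lemma pushC (A A' A'' D : Ob) (a : hom A A') (a' : hom A' A'') (d : Ext D A) :
  push (comp a' a) d = push a' (push a d).
Proof. by unpackC HC; apply: Hpc. Qed.
Lemma pullC (A D D' D'' : Ob) (c : hom D' D) (c' : hom D'' D') (d : Ext D A) :
  pull (comp c c') d = pull c' (pull c d).
Proof. by unpackC HC; apply: Hqc. Qed.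
Lemma pushpull (A A' D D' : Ob) (a : hom A A') (c : hom D' D) (d : Ext D A) :
  push a (pull c d) = pull c (push a d).
Proof. by unpackC HC; apply: Hpq. Qed.
Lemma pushDr (A A' D : Ob) (a : hom A A') (d d' : Ext D A) :
  push a (d + d') = push a d + push a d'.
Proof. by unpackC HC; apply: Hpa. Qed.
Lemma pushDl (A A' D : Ob) (a a' : hom A A') (d : Ext D A) :
  push (a + a') d = push a d + push a' d.
Proof. by unpackC HC; apply: Hpa'. Qed.
Lemma pullDr (A D D' : Ob) (c : hom D' D) (d d' : Ext D A) :
  pull c (d + d') = pull c d + pull c d'.
Proof. by unpackC HC; apply: Hqa. Qed.
Lemma pullDl (A D D' : Ob) (c c' : hom D' D) (d : Ext D A) :
  pull (c + c') d = pull c d + pull c' d.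
Proof. by unpackC HC; apply: Hqa'. Qed.
Lemma push0l (A A' D : Ob) (d : Ext D A) : push (0 : hom A A') d = 0.
Proof. exact: (addf0 (fun a a' => pushDl a a' d)). Qed.
Lemma push0r (A A' D : Ob) (a : hom A A') : push a (0 : Ext D A) = 0.
Proof. exact: (addf0 (pushDr a)). Qed.
Lemma pull0l (A D D' : Ob) (d : Ext D A) : pull (0 : hom D' D) d = 0.
Proof. exact: (addf0 (fun c c' => pullDl c c' d)). Qed.
Lemma pull0r (A D D' : Ob) (c : hom D' D) : pull c (0 : Ext D A) = 0.
Proof. exact: (addf0 (pullDr c)). Qed.
Lemma pushBr (A A' D : Ob) (a : hom A A') (d d' : Ext D A) :
  push a (d - d') = push a d - push a d'.
Proof. exact: (addfB (pushDr a)). Qed.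
Lemma pullBr (A D D' : Ob) (c : hom D' D) (d d' : Ext D A) :
  pull c (d - d') = pull c d - pull c d'.
Proof. exact: (addfB (pullDr c)). Qed.
Lemma pullBl (A D D' : Ob) (c c' : hom D' D) (d : Ext D A) :
  pull (c - c') d = pull c d - pull c' d.
Proof. exact: (addfB (fun c c' => pullDl c c' d)). Qed.

Lemma real_comp0 (A B D : Ob) (d : Ext D A) (x : hom A B) (y : hom B D) :
  real d x y -> comp y x = 0.
Proof.
move=> Hr; unpackC HC.
case: (Hbip A D) => P [i1 [i2 [p1 [p2 Hb]]]].
have R0 := Har1 _ _ _ _ _ _ _ Hb.
have E : push (0 : hom A A) d = pull (idm D) 0 by rewrite push0l pull0r.
have [b [Hb1 Hb2]] := Hr3 _ _ _ _ _ _ d 0 x y i1 p2 0 (idm D) Hr R0 E.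
rewrite comp1l in Hb2; rewrite -Hb2 -compA Hb1 compr0 compr0 //.
Qed.


Lemma split0 (A E D : Ob) (e : hom A E) (e' : hom E D) :
  real (0 : Ext D A) e e' ->
  exists (s0 : hom D E) (r : hom E A),
    [/\ comp e' s0 = idm D, comp r e = idm A, comp r s0 = 0,
        comp e' e = 0 & comp s0 e' + comp e r = idm E].
Proof.
move=> Hr; have He'e := real_comp0 Hr; unpackC HC.
case: (Hbip A D) => P [i1 [i2 [p1 [p2 [H11 H22 H12 H21 Hsum]]]]].
have R0 : real (0 : Ext D A) i1 p2 by apply: (Har1 _ _ _ i1 i2 p1 p2); split.
have [b [[g [Hgb Hbg]] [Hbi1 He'b]]] := (proj1 (Hr2 _ _ _ _ _ _ _ _ _ R0) Hr).
have He' : e' = comp p2 g by rewrite -[e']comp1r -Hbg compA He'b.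
subst e e'.
exists (comp b i2), (comp p1 g); split => //.
- by rewrite -!compA (compA g b) Hgb comp1l.
- by rewrite -!compA (compA g b) Hgb comp1l.
- by rewrite -!compA (compA g b) Hgb comp1l.
- rewrite -!compA -compDr (compA i2) (compA i1) -compDl addrC Hsum comp1l.
  by rewrite Hbg.
Qed.

Lemma exact_push (K E0 Y D : Ob) (k : hom K E0) (w : hom E0 Y)
  (d0 : Ext Y K) (eps : Ext D K) :
  real d0 k w -> push k eps = 0 -> exists c : hom D Y, eps = pull c d0.
Proof.
move=> Hd0 Hpe; unpackC HC.
case: (Hr1 _ _ eps) => V [u [v Huv]].
case: (Hbip E0 D) => P [i1 [i2 [p1 [p2 [H11 H22 H12 H21 Hsum]]]]].
have R0 : real (0 : Ext D E0) i1 p2 by apply: (Har1 _ _ _ i1 i2 p1 p2); split.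
have E : push k eps = pull (idm D) 0 by rewrite Hpe pull0r.
have [b [Hb1 Hb2]] := Hr3 _ _ _ _ _ _ eps 0 u v i1 p2 k (idm D) Huv R0 E.
have Hc : comp (comp p1 b) u = comp k (idm K)
  by rewrite -compA Hb1 compA H11 comp1l comp1r.
have [c [_ Hc2]] := H3 _ _ _ _ _ _ eps d0 u v k w (idm K) (comp p1 b) Huv Hd0 Hc.
by exists c; rewrite -Hc2 push1.
Qed.


Lemma key (X : Ob -> Prop) (K X0 D E0 Y : Ob) (x : hom K X0) (y : hom X0 D)
  (d : Ext D K) (k : hom K E0) (w : hom E0 Y) (d0 : Ext Y K) :
  subcategory X -> extension_closed X -> X X0 -> X Y ->
  real d x y -> real d0 k w -> exists M, X M /\ Etri E0 M D.
Proof.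
move=> HX Hext HX0 HY Hd Hd0; unpackC HC.
case: (Hr1 _ _ (push k d)) => M [m [p Hmp]].
exists M; split; last by exists m, p, (push k d).
have [E [e [e' [h' [d'' [Hd'' [He [_ [_ [Hpe Hpk]]]]]]]]]] :=
  H4 _ _ _ _ _ d0 (push k d) k w m p Hd0 Hmp.
rewrite -pushC (real_comp0 Hd0) push0l in He.
have [s0 [r [Hs0 Hre Hrs Hee Hsum]]] := split0 He.
have Hpk1 : push k (pull s0 d'' - d) = 0.
  by rewrite pushBr pushpull Hpk -pullC Hs0 pull1 subrr.
have [c Hc] := exact_push Hd0 Hpk1.
pose s := s0 - comp e c. pose r' := r + comp c e'.
have Hbp : is_biproduct s e e' r'.
  split.
  - by rewrite /s compBr Hs0 compA Hee comp0l subr0.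
  - by rewrite /r' compDl Hre -compA Hee compr0 addr0.
  - by [].
  - rewrite /r' /s compDl !compBr Hrs compA Hre comp1l -!compA Hs0 comp1r.
    by rewrite (compA e' e c) Hee comp0l compr0 subr0 sub0r addNr.
  - rewrite /r' /s compBl compDr (compA e c e') -Hsum.
    by rewrite [comp e r + _]addrC addrA subrK.
have R0 := Har1 _ _ _ s e e' r' Hbp.
have [E2 [e3 [e4 [h2 [d3 [Hd3 [He34 _]]]]]]] :=
  H4op _ _ _ _ _ d'' 0 (comp m k) h' s r' Hd'' R0.
have Hps : pull s d'' = d.
  by rewrite /s pullBl pullC Hpe -Hc opprB addrC subrK.
rewrite Hps in He34.
have [b [Hiso _]] := proj1 (Hr2 _ _ _ _ _ _ _ _ _ Hd) He34.
case: HX => Hisocl _ _ _.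
have XE2 : X E2 := Hisocl _ _ (ex_intro _ b Hiso) HX0.
apply: (Hext E2 M Y) => //.
by exists h2, (comp r' h'), d3.
Qed.

End Basic.

Theorem lemma3p6 (C : ExtriData) (X W : obj C -> Prop) (n : nat) (D : obj C) :
  extriangulated C -> enough_projectives C -> enough_injectives C ->
  subcategory X -> subcategory W ->
  extension_closed X -> cogenerator W X -> (1 <= n)%N ->
  (Xhat X n D <-> W_resolution X W n D).
Proof.
move=> HC _ _ HX HW Hext [HWX Hcog] Hn; split.
- elim: n Hn D => [|n IH] // Hn D [K [HK0 HKn HKi]].
  case: n IH Hn HKn HKi => [|n] IH _ HKn HKi.
  + have [X0 [HX0 [x [y [d Hd]]]]] := HKi 0%N isT.
    subst D.
    have [W0 [X' [HW0 [HX' [k [w [d0 Hd0]]]]]]] := Hcog _ HKn.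
    have [M [HM HEt]] := key HC HX Hext HX0 HX' Hd Hd0.
    exists M, (fun _ => W0); split => //.
    by case.
  + have HK1 : Xhat X n.+1 (K 1%N).
      exists (fun i => K i.+1); split => //.
      by move=> i Hi; apply: HKi.
    have [Y0 [L [HY0 HL1 HLn HLi]]] := IH isT _ HK1.
    have [X0 [HX0 [x [y [d Hd]]]]] := HKi 0%N isT.
    subst D.
    case: HL1 => l [q [dl Hdl]].
    have [W1 [Y' [HW1 [HY' [u [v [du Hdu]]]]]]] := Hcog _ HY0.
    case: (HC) => _ [_ [_ [_ [_ [_ [_ [H4 _]]]]]]].
    have [E [e [e' [h' [d'' [Hd'' [He _]]]]]]] := H4 _ _ _ _ _ dl du l q u v Hdl Hdu.
    have [M [HM HEt]] := key HC HX Hext HX0 HY' Hd He.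
    exists M, (fun i => if i == 1%N then E else L i.-1); split => //.
    case=> [|[|j]] // _ Hj.
    * by exists W1; split => //; exists (comp u l), h', d''.
    * have Hj' : (j.+1 <= n.+1 - 1)%N by move: Hj; rewrite !subn1.
      exact: (HLi j.+1 isT Hj').
- case=> X0 [K [HX0 HK1 HKn HKi]].
  exists (fun i => if i is 0%N then D else K i); split => //.
  + by case: n Hn HKn HKi => // n _ HKn _; apply: HWX.
  + case=> [|i] Hi; first by exists X0.
    have Hi' : (i.+1 <= n - 1)%N.
      by rewrite ltn_subRL add1n.
    have [Wi [HWi HEt]] := HKi i.+1 isT Hi'.
    by exists Wi; split => //; apply: HWX.
Qed.
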